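(* Let $M=\{D(c_i;r_i)\subset\mathbb R^d: r_i>0,\ 1\le i\le m\}$ be a finite set of closed balls in $\mathbb R^d$ such that $D(c_i;r_i)\cap D(c_j;r_j)\ne\emptyset$ for every pair $i,j$. Then $$\bigcap_{i=1}^m D\!\left(c_i;\sqrt{\tfrac{2d}{d+1}}\,r_i\right)\neq\emptyset.$$
   Context: $D(c;r)=\{x\in\mathbb R^d:\|x-c\|\le r\}$ denotes the closed Euclidean ball. The radii $r_i$ may differ from one another. *)

(* Defs.v *)
From Stdlib Require Import Reals.
Open Scope R_scope.

(* A point of R^d is represented by a function nat -> R, of which only the
   coordinates 0 .. d-1 are relevant. *)
Definition point := nat -> R.

Fixpoint sqsum (d : nat) (v : point) : R :=
  match d with
  | O => 0
  | S k => sqsum k v + (v k) ^ 2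
  end.

Definition enorm (d : nat) (v : point) : R := sqrt (sqsum d v).

Definition in_ball (d : nat) (c : point) (r : R) (x : point) : Prop :=
  enorm d (fun k => x k - c k) <= r.

(* Main.v *)
Require Import Defs.
From Stdlib Require Import Reals Lra Lia Classical.
Open Scope R_scope.
Fixpoint sm (n : nat) (f : nat -> R) : R :=
  match n with O => 0 | S k => sm k f + f k end.

Definition psi (m d : nat) (a : nat -> R) (C : nat -> nat -> R) (mu : nat -> R) : R :=
  sm m (fun i => mu i * a i) - sm d (fun k => (sm m (fun i => mu i * C i k)) ^ 2).

Definition simplex (m : nat) (mu : nat -> R) : Prop :=
  (forall i, (i < m)%nat -> 0 <= mu i) /\ sm m mu = 1.

Lemma sm_ext n f g : (forall i, (i < n)%nat -> f i = g i) -> sm n f = sm n g.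
Proof. induction n; simpl; intros H; auto. rewrite IHn, H; auto. Qed.

Lemma psi_ext m d a C mu nu : (forall i, (i < m)%nat -> mu i = nu i) ->
  psi m d a C mu = psi m d a C nu.
Proof.
  intros H; unfold psi. f_equal.
  - apply sm_ext; intros; rewrite H; auto.
  - apply sm_ext; intros; f_equal. apply sm_ext; intros; rewrite H; auto.
Qed.

Lemma simplex_ext m mu nu : (forall i, (i < m)%nat -> mu i = nu i) ->
  simplex m mu -> simplex m nu.
Proof.
  intros H [H1 H2]; split.
  - intros i Hi; rewrite <- H; auto.
  - rewrite <- H2; symmetry; apply sm_ext; auto.
Qed.

Module Bridge.
From HB Require Import structures.
From mathcomp Require Import all_boot all_order all_algebra.
From mathcomp Require Import all_classical all_reals all_analysis.
From mathcomp Require Import Rstruct Rstruct_topology.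
Import Order.TTheory GRing.Theory Num.Theory.
Import numFieldNormedType.Exports.
Local Open Scope classical_set_scope.
Local Open Scope ring_scope.

Lemma smE n f : sm n f = \sum_(i < n) f i.
Proof.
elim: n => [|n IH] /=; first by rewrite big_ord0.
by rewrite big_ord_recr /= IH.
Qed.


Section S.
Variables (m d : nat) (a : nat -> R) (C : nat -> nat -> R).
Definition F (w : 'rV[R]_m) : R :=
  \sum_(i < m) w ord0 i * a i - \sum_(k < d) (\sum_(i < m) w ord0 i * C i k) ^+ 2.
Definition Simp : set 'rV[R]_m :=
  [set w | (forall i, 0 <= w ord0 i) /\ \sum_(i < m) w ord0 i = 1].

Lemma cont_sum (I : Type) (s : seq I) (G : I -> 'rV[R]_m -> R) :
  (forall i, continuous (G i)) -> continuous (fun w => \sum_(i <- s) G i w).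
Proof.
move=> HG; elim: s => [|x s IH].
  have -> : (fun w => \sum_(i <- [::]) G i w) = (fun=> 0).
    by apply: funext => w; rewrite big_nil.
  exact: cst_continuous.
have -> : (fun w => \sum_(i <- x :: s) G i w) = (G x \+ (fun w => \sum_(i <- s) G i w)).
  by apply: funext => w; rewrite big_cons.
move=> w; apply: (@continuousD R R^o); [exact: HG| exact: IH].
Qed.

Lemma F_cont : continuous F.
Proof.
move=> w; apply: (@continuousB R R^o).
  apply: cont_sum => i v; apply: (@continuousM R); first exact: coord_continuous.
  exact: cst_continuous.
apply: cont_sum => k v; rewrite /GRing.exp /=.
have H : continuous (fun w : 'rV[R]_m => \sum_(i < m) w ord0 i * C i k).
  apply: cont_sum => i u; apply: (@continuousM R); first exact: coord_continuous.
  exact: cst_continuous.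
apply: (@continuousM R); first exact: H. exact: H.
Qed.

Lemma Simp_closed : closed Simp.
Proof.
have -> : Simp = \bigcap_(i in [set: 'I_m]) ((fun w : 'rV[R]_m => w ord0 i) @^-1` [set x | 0 <= x])
   `&` ((fun w : 'rV[R]_m => \sum_(i < m) w ord0 i) @^-1` [set 1]).
  apply/seteqP; split => w /=.
    by move=> [H1 H2]; split => // i _; exact: H1.
  by move=> [H1 H2]; split => // i; exact: H1.
apply: closedI.
  apply: closed_bigI => i _; apply: preimage_closed; last exact: closed_ge.
  move=> w _; exact: coord_continuous.
apply: preimage_closed; last exact: closed_eq.
move=> w _; apply: cont_sum => i; exact: coord_continuous.
Qed.

Lemma Simp_compact : compact Simp.
Proof.
apply: (subclosed_compact Simp_closed
  (@rV_compact _ _ (fun=> `[(0:R), 1]%classic) (fun _ => @segment_compact _ 0 1))).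
move=> w [H1 H2] i /=; rewrite in_itv /= H1 /= -H2.
rewrite (bigD1 i) //= lerDl; apply: sumr_ge0 => j _; exact: H1.
Qed.

Lemma evt (m0 : (0 < m)%N) : exists2 v, v \in Simp & forall w, w \in Simp -> F w <= F v.
Proof.
apply: EVT_max_rV; last first.
- move=> w; apply: continuous_subspaceT; exact: F_cont.
- exact: Simp_compact.
exists (\row_(i < m) (if (i : nat) == 0%N then 1 else 0)); split.
  by move=> i; rewrite mxE; case: ifP.
rewrite (bigD1 (Ordinal m0)) //= mxE eqxx big1 ?addr0 // => i /negbTE.
by rewrite mxE; case: ifP => // /eqP Hi; rewrite -val_eqE /= Hi.
Qed.
End S.

Lemma bridge (m d : nat) (a : nat -> R) (C : nat -> nat -> R) : (0 < m)%coq_nat ->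
  exists mu, simplex m mu /\ forall nu, simplex m nu -> Rle (psi m d a C nu) (psi m d a C mu).
Proof.
case: m => [/Nat.lt_irrefl []|n _].
have [v vS vmax] := @evt n.+1 d a C (ltn0Sn n).
have psiE : forall w : 'rV[R]_n.+1,
   psi n.+1 d a C (fun i => w ord0 (inord i)) = F n.+1 d a C w.
  move=> w; rewrite /psi /F !smE RminusE.
  congr (_ - _).
    by apply: eq_bigr => i _; rewrite inord_val.
  apply: eq_bigr => k _; rewrite RpowE smE; congr (_ ^+ _).
  by apply: eq_bigr => i _; rewrite inord_val.
have SE : forall w : 'rV[R]_n.+1, w \in Simp n.+1 <->
   simplex n.+1 (fun i => w ord0 (inord i)).
  move=> w; rewrite inE /Simp /simplex smE /=; split.
    move=> [H1 H2]; split; last first.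
      by apply: etrans H2; apply: eq_bigr => i _; rewrite inord_val.
    move=> i _; apply/RleP; exact: H1.
  move=> [H1 H2]; split.
    move=> i; have := H1 i (ssrnat.ltP (ltn_ord i)) => /RleP; by rewrite inord_val.
  by apply: etrans H2; apply: eq_bigr => i _; rewrite inord_val.
exists (fun i => v ord0 (inord i)); split; first exact/SE.
move=> nu nuS.
pose w := \row_(i < n.+1) nu i.
have wE : forall i, (i < n.+1)%coq_nat -> w ord0 (inord i) = nu i.
  by move=> i /ssrnat.ltP Hi; rewrite mxE inordK.
rewrite (psi_ext _ _ _ _ _ _ (fun i Hi => esym (wE i Hi))) !psiE.
apply/RleP; apply: vmax; apply/SE.
apply: (simplex_ext _ _ _ _ nuS) => i Hi; by rewrite wE.
Qed.
End Bridge.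
Local Open Scope bool_scope.
Local Open Scope R_scope.
Lemma sm_add n f g : sm n (fun i => f i + g i) = sm n f + sm n g.
Proof. induction n; simpl; [lra| rewrite IHn; lra]. Qed.
Lemma sm_mul_l n c f : sm n (fun i => c * f i) = c * sm n f.
Proof. induction n; simpl; [lra| rewrite IHn; lra]. Qed.
Lemma sm_opp n f : sm n (fun i => - f i) = - sm n f.
Proof. induction n; simpl; [lra| rewrite IHn; lra]. Qed.
Lemma sm_sub n f g : sm n (fun i => f i - g i) = sm n f - sm n g.
Proof. induction n; simpl; [lra| rewrite IHn; lra]. Qed.
Lemma sm_zero n f : (forall i, (i < n)%nat -> f i = 0) -> sm n f = 0.
Proof. induction n; simpl; intros H; [lra|]. rewrite IHn, H; [lra|lia|intros; apply H; lia]. Qed.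
Lemma sm_le n f g : (forall i, (i < n)%nat -> f i <= g i) -> sm n f <= sm n g.
Proof. induction n; simpl; intros H; [lra|]. assert (f n <= g n) by (apply H; lia).
  assert (sm n f <= sm n g) by (apply IHn; intros; apply H; lia). lra. Qed.
Lemma sm_nonneg n f : (forall i, (i < n)%nat -> 0 <= f i) -> 0 <= sm n f.
Proof. intros H. replace 0 with (sm n (fun _ => 0)) by (apply sm_zero; auto).
  apply sm_le; auto. Qed.
Lemma sm_swap n k (F : nat -> nat -> R) :
  sm n (fun i => sm k (fun j => F i j)) = sm k (fun j => sm n (fun i => F i j)).
Proof. induction n; simpl.
  - symmetry; apply sm_zero; auto.
  - rewrite IHn, <- sm_add; reflexivity. Qed.
Definition dl (i l : nat) : R := if Nat.eq_dec l i then 1 else 0.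
Lemma sm_delta n i f : (i < n)%nat -> sm n (fun l => dl i l * f l) = f i.
Proof. induction n as [|n IHn]; simpl; intros H; [lia|]. unfold dl at 2.
  destruct (Nat.eq_dec n i).
  - subst i. rewrite sm_zero; [lra|]. intros l Hl; unfold dl; destruct (Nat.eq_dec l n); [lia|lra].
  - rewrite IHn; [lra|lia]. Qed.
Lemma sqsum_sm d v : sqsum d v = sm d (fun k => v k ^ 2).
Proof. induction d; simpl; auto. rewrite IHd; auto. Qed.

Fixpoint cntb (m : nat) (S : nat -> bool) : nat :=
  match m with O => O | Datatypes.S k => (cntb k S + (if S k then 1 else 0))%nat end.

Lemma cntb_pos m S : (0 < cntb m S)%nat -> exists i, (i < m)%nat /\ S i = true.
Proof. induction m; simpl; intros H; [lia|].
  destruct (S m) eqn:E; [exists m; split; auto|].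
  destruct IHm as [i [Hi Hs]]; [lia|]. exists i; split; auto. Qed.

Lemma cntb_mono m S S' : (forall i, (i < m)%nat -> S' i = true -> S i = true) ->
  (cntb m S' <= cntb m S)%nat.
Proof. induction m; simpl; intros H; [lia|].
  assert (cntb m S' <= cntb m S)%nat by (apply IHm; intros; apply H; auto).
  destruct (S' m) eqn:E1; [rewrite (H m); [lia|lia|auto]|]. destruct (S m); lia. Qed.

Lemma cntb_lt m S S' i0 : (forall i, (i < m)%nat -> S' i = true -> S i = true) ->
  (i0 < m)%nat -> S i0 = true -> S' i0 = false -> (cntb m S' < cntb m S)%nat.
Proof. induction m; simpl; intros H Hi0 H1 H2; [lia|].
  destruct (Nat.eq_dec i0 m).
  - subst i0. rewrite H1, H2.
    assert (cntb m S' <= cntb m S)%nat by (apply cntb_mono; intros; apply H; auto). lia.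
  - assert (cntb m S' < cntb m S)%nat by (apply IHm; auto; lia).
    destruct (S' m) eqn:E1; [rewrite (H m); [lia|lia|auto]|]. destruct (S m); lia. Qed.

Lemma cntb_remove m S i0 : (i0 < m)%nat -> S i0 = true ->
  cntb m S = Datatypes.S (cntb m (fun i => S i && negb (Nat.eqb i i0))).
Proof. induction m; simpl; intros Hi H; [lia|].
  destruct (Nat.eq_dec i0 m).
  - subst i0. rewrite H, Nat.eqb_refl. simpl.
    assert (cntb m (fun i => S i && negb (i =? m)%nat) = cntb m S).
    { clear. assert (forall k, (k <= m)%nat -> cntb k (fun i => S i && negb (i =? m)%nat) = cntb k S).
      { induction k; simpl; intros; auto. rewrite IHk; [|lia].
        replace (k =? m)%nat with false by (symmetry; apply Nat.eqb_neq; lia).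
        rewrite Bool.andb_true_r; auto. }
      apply H; lia. }
    rewrite H0; lia.
  - rewrite IHm; auto; [|lia].
    replace (m =? i0)%nat with false by (symmetry; apply Nat.eqb_neq; lia).
    rewrite Bool.andb_true_r; lia. Qed.

Lemma sm_upd m (b : nat -> R) i0 A f : (i0 < m)%nat -> b i0 = 0 ->
  sm m (fun i => (if Nat.eqb i i0 then A else b i) * f i) = sm m (fun i => b i * f i) + A * f i0.
Proof. intros Hi Hb.
  rewrite <- (sm_delta m i0 (fun i => A * f i)) by auto.
  rewrite <- sm_add. apply sm_ext. intros i _. unfold dl.
  destruct (Nat.eqb_spec i i0); destruct (Nat.eq_dec i i0); try lia; subst; try rewrite Hb; lra. Qed.

Lemma LD (D : nat) : forall m (S : nat -> bool) (u : nat -> nat -> R),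
  (D < cntb m S)%nat -> exists al : nat -> R,
  (forall i, S i = false -> al i = 0) /\ (exists i, (i < m)%nat /\ al i <> 0) /\
  (forall k, (k < D)%nat -> sm m (fun i => al i * u i k) = 0).
Proof.
  induction D; intros m S u H.
  - destruct (cntb_pos m S) as [i [Hi Hs]]; [lia|].
    exists (dl i). split; [|split].
    + intros l Hl; unfold dl; destruct (Nat.eq_dec l i); [subst; congruence|auto].
    + exists i; split; auto; unfold dl; destruct (Nat.eq_dec i i); [lra|congruence].
    + intros; lia.
  - destruct (classic (exists i0, (i0 < m)%nat /\ S i0 = true /\ u i0 D <> 0)) as [[i0 [Hi0 [HS Hu]]]|Hno].
    + set (S' := fun i => S i && negb (Nat.eqb i i0)).
      assert (HD : (D < cntb m S')%nat) by (pose proof (cntb_remove m S i0 Hi0 HS); unfold S'; lia).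
      set (u' := fun i k => u i k - (u i D / u i0 D) * u i0 k).
      destruct (IHD m S' u' HD) as [be [Hs [[j [Hj Hbj]] Hk]]].
      assert (Hb0 : be i0 = 0) by (apply Hs; unfold S'; rewrite Nat.eqb_refl, Bool.andb_false_r; auto).
      set (A := - sm m (fun l => be l * u l D) / u i0 D).
      exists (fun i => if Nat.eqb i i0 then A else be i). split; [|split].
      * intros i Hi. destruct (Nat.eqb_spec i i0); [subst; congruence|].
        apply Hs; unfold S'; rewrite Hi; auto.
      * exists j; split; auto. destruct (Nat.eqb_spec j i0); [subst; congruence|auto].
      * intros k Hk'. rewrite sm_upd by auto.
        destruct (Nat.eq_dec k D).
        -- subst k. unfold A. field. auto.
        -- assert (Hk2 := Hk k ltac:(lia)). unfold u' in Hk2.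
           assert (E : sm m (fun i => be i * (u i k - u i D / u i0 D * u i0 k)) =
                      sm m (fun i => be i * u i k) - (sm m (fun l => be l * u l D)) / u i0 D * u i0 k).
           { transitivity (sm m (fun i => be i * u i k) - sm m (fun i => (/ u i0 D * u i0 k) * (be i * u i D))).
             - rewrite <- sm_sub. apply sm_ext; intros; field; auto.
             - rewrite sm_mul_l. field; auto. }
           rewrite E in Hk2. unfold A. unfold Rdiv in *. lra.
    + destruct (IHD m S u ltac:(lia)) as [al [Hs [Hnz Hk]]].
      exists al; split; [|split]; auto.
      intros k Hk'. destruct (Nat.eq_dec k D); [|apply Hk; lia].
      subst k. apply sm_zero. intros i Hi.
      destruct (S i) eqn:E.
      * assert (u i D = 0) by (apply NNPP; intro; apply Hno; exists i; auto). rewrite H0; lra.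
      * rewrite Hs; auto; lra.
Qed.

Lemma sm_lin2 n f t g h : sm n (fun i => (f i + t * g i) * h i) =
  sm n (fun i => f i * h i) + t * sm n (fun i => g i * h i).
Proof. rewrite <- sm_mul_l, <- sm_add. apply sm_ext; intros; ring. Qed.

Section Main.
Variables (m d : nat) (c : nat -> point) (r : nat -> R) (L : R).
Definition a i := sqsum d (c i) - L * r i ^ 2.
Definition Cc (i k : nat) := c i k.
Definition xb (mu : nat -> R) k := sm m (fun i => mu i * c i k).
Definition g mu i := a i - 2 * sm d (fun k => xb mu k * c i k).
Definition Psi mu := psi m d a Cc mu.
Definition IsMax mu := simplex m mu /\ forall nu, simplex m nu -> Psi nu <= Psi mu.

Lemma Psi_shift mu e t : Psi (fun l => mu l + t * e l) =
  Psi mu + t * (sm m (fun i => e i * a i) - 2 * sm d (fun k => xb mu k * xb e k))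
  - t ^ 2 * sm d (fun k => xb e k ^ 2).
Proof.
  unfold Psi, psi. rewrite sm_lin2.
  rewrite (sm_ext d (fun k => sm m (fun i => (mu i + t * e i) * Cc i k) ^ 2)
     (fun k => xb mu k ^ 2 + (t * 2) * (xb mu k * xb e k) + t ^ 2 * xb e k ^ 2)).
  2:{ intros k _. rewrite sm_lin2. unfold xb, Cc. ring. }
  rewrite !sm_add, !sm_mul_l. fold (xb mu). unfold xb, Cc. ring.
Qed.

Lemma xb_delta i j k : (i < m)%nat -> (j < m)%nat ->
  xb (fun l => dl i l - dl j l) k = c i k - c j k.
Proof. intros Hi Hj. unfold xb.
  rewrite (sm_ext m _ (fun l => dl i l * c l k - dl j l * c l k)) by (intros; ring).
  rewrite sm_sub, !sm_delta; auto. Qed.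

Lemma KKT mu : IsMax mu -> forall i j, (i < m)%nat -> (j < m)%nat -> 0 < mu j ->
  g mu i <= g mu j.
Proof.
  intros [[Hpos Hsum] Hmx] i j Hi Hj Hmj.
  destruct (Nat.eq_dec i j) as [->|Hij]; [lra|].
  set (e := fun l => dl i l - dl j l).
  set (W := sm d (fun k => xb e k ^ 2)).
  assert (HW : 0 <= W) by (apply sm_nonneg; intros; apply pow2_ge_0).
  assert (Hg : sm m (fun l => e l * a l) - 2 * sm d (fun k => xb mu k * xb e k) = g mu i - g mu j).
  { unfold e. rewrite (sm_ext m _ (fun l => dl i l * a l - dl j l * a l)) by (intros; ring).
    rewrite sm_sub, !sm_delta by auto.
    rewrite (sm_ext d _ (fun k => xb mu k * c i k - xb mu k * c j k)).
    2:{ intros k _. rewrite xb_delta by auto. ring. }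
    rewrite sm_sub. unfold g. ring. }
  assert (Hineq : forall t, 0 < t <= mu j -> t * (g mu i - g mu j) - t ^ 2 * W <= 0).
  { intros t Ht. rewrite <- Hg.
    assert (Hs : simplex m (fun l => mu l + t * e l)).
    { split.
      - intros l Hl. unfold e, dl. destruct (Nat.eq_dec l i); destruct (Nat.eq_dec l j); subst;
        try lia; specialize (Hpos _ Hl); nra.
      - rewrite sm_add, sm_mul_l. unfold e. rewrite sm_sub.
        rewrite (sm_ext m (dl i) (fun l => dl i l * 1)) by (intros; ring).
        rewrite (sm_ext m (dl j) (fun l => dl j l * 1)) by (intros; ring).
        rewrite !sm_delta by auto. lra. }
    specialize (Hmx _ Hs). rewrite Psi_shift in Hmx. fold W in Hmx. lra. }
  apply Rnot_lt_le. intro Hlt.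
  set (dlt := g mu i - g mu j).
  assert (Hd : 0 < dlt) by (unfold dlt; lra).
  set (t := Rmin (mu j) (dlt / (W + 1))).
  assert (Ht0 : 0 < t) by (unfold t; apply Rmin_pos; [lra| apply Rdiv_lt_0_compat; lra]).
  assert (Ht1 : t <= mu j) by apply Rmin_l.
  assert (Ht2 : t <= dlt / (W + 1)) by apply Rmin_r.
  assert (Ht3 : t * (W + 1) <= dlt).
  { apply Rmult_le_compat_r with (r := W + 1) in Ht2; [|lra].
    unfold Rdiv in Ht2. rewrite Rmult_assoc, Rinv_l in Ht2; lra. }
  specialize (Hineq t (conj Ht0 Ht1)). fold dlt in Hineq. nra.
Qed.

Definition supp (mu : nat -> R) (i : nat) : bool := if Req_EM_T (mu i) 0 then false else true.
Definition cnt mu := cntb m (supp mu).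

Lemma supp_false mu i : supp mu i = false -> mu i = 0.
Proof. unfold supp; destruct (Req_EM_T (mu i) 0); auto; discriminate. Qed.
Lemma supp_true mu i : supp mu i = true -> mu i <> 0.
Proof. unfold supp; destruct (Req_EM_T (mu i) 0); auto; discriminate. Qed.
Lemma supp_true' mu i : mu i <> 0 -> supp mu i = true.
Proof. unfold supp; destruct (Req_EM_T (mu i) 0); auto; contradiction. Qed.

Lemma argmin : forall n (be mu : nat -> R), (exists i, (i < n)%nat /\ be i < 0) ->
  exists is, (is < n)%nat /\ be is < 0 /\
   forall j, (j < n)%nat -> be j < 0 -> mu is / - be is <= mu j / - be j.
Proof.
  induction n; intros be mu [i [Hi Hb]]; [lia|].
  destruct (classic (exists i, (i < n)%nat /\ be i < 0)) as [Hex|Hno].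
  - destruct (IHn be mu Hex) as [is [Hs [Hbs Hmin]]].
    destruct (Rlt_dec (be n) 0) as [Hbn|Hbn].
    + destruct (Rle_dec (mu is / - be is) (mu n / - be n)).
      * exists is; split; [lia|split; auto]. intros j Hj Hbj.
        destruct (Nat.eq_dec j n); [subst; auto|apply Hmin; auto; lia].
      * exists n; split; [lia|split; auto]. intros j Hj Hbj.
        destruct (Nat.eq_dec j n); [subst; lra|].
        specialize (Hmin j ltac:(lia) Hbj). lra.
    + exists is; split; [lia|split; auto]. intros j Hj Hbj.
      destruct (Nat.eq_dec j n); [subst; lra|apply Hmin; auto; lia].
  - assert (i = n) by (destruct (Nat.eq_dec i n); auto; exfalso; apply Hno; exists i; split; auto; lia).
    subst i. exists n; split; [lia|split; auto]. intros j Hj Hbj.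
    destruct (Nat.eq_dec j n); [subst; lra|]. exfalso; apply Hno; exists j; split; auto; lia.
Qed.

Lemma reduce mu : IsMax mu -> (d + 1 < cnt mu)%nat -> exists nu, IsMax nu /\ (cnt nu < cnt mu)%nat.
Proof.
  intros Hmax Hc. pose proof Hmax as [[Hpos Hsum] Hmx].
  set (u := fun i k => if Nat.ltb k d then c i k else 1).
  destruct (LD (d + 1) m (supp mu) u Hc) as [al [Hsup [[i0 [Hi0 Hal0]] Hk]]].
  set (be := fun i => if Rlt_dec (al i0) 0 then al i else - al i).
  assert (Hbe0 : be i0 < 0).
  { unfold be; destruct (Rlt_dec (al i0) 0); auto. apply Rnot_lt_le in n. lra. }
  assert (Hbsup : forall i, supp mu i = false -> be i = 0).
  { intros i Hi; unfold be; rewrite (Hsup i Hi). destruct (Rlt_dec (al i0) 0); lra. }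
  assert (Hbk : forall k, (k < d + 1)%nat -> sm m (fun i => be i * u i k) = 0).
  { intros k Hk'. unfold be. destruct (Rlt_dec (al i0) 0); auto.
    rewrite (sm_ext m _ (fun i => - (al i * u i k))) by (intros; ring).
    rewrite sm_opp, Hk; auto; lra. }
  assert (Hbsum : sm m be = 0).
  { rewrite <- (Hbk d) by lia. apply sm_ext. intros i _. unfold u.
    rewrite Nat.ltb_irrefl. ring. }
  assert (Hbxb : forall k, (k < d)%nat -> xb be k = 0).
  { intros k Hk'. rewrite <- (Hbk k) by lia. apply sm_ext. intros i _. unfold u.
    replace (Nat.ltb k d) with true by (symmetry; apply Nat.ltb_lt; auto). auto. }
  destruct (argmin m be mu (ex_intro _ i0 (conj Hi0 Hbe0))) as [is [His [Hbis Hmin]]].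
  assert (Hmis : 0 < mu is).
  { assert (mu is <> 0).
    { intro H0. assert (supp mu is = false) by (unfold supp; destruct (Req_EM_T (mu is) 0); auto; contradiction).
      rewrite Hbsup in Hbis; auto; lra. }
    specialize (Hpos is His); lra. }
  set (s := mu is / - be is).
  assert (Hs0 : 0 <= s) by (unfold s; apply Rmult_le_pos; [lra| left; apply Rinv_0_lt_compat; lra]).
  set (nu := fun l => mu l + s * be l).
  assert (Hba : sm m (fun i => be i * a i) = 0).
  { rewrite (sm_ext m _ (fun i => g mu is * be i + 2 * sm d (fun k => be i * c i k * xb mu k))).
    2:{ intros i Hi. destruct (Req_EM_T (be i) 0) as [E|E]; [rewrite E; rewrite sm_zero by (intros; ring); ring|].
        assert (Hsi : supp mu i = true) by (destruct (supp mu i) eqn:Q; auto; exfalso; apply E; auto).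
        apply supp_true in Hsi. assert (0 < mu i) by (specialize (Hpos i Hi); lra).
        assert (g mu i = g mu is) by (apply Rle_antisym; apply KKT; auto).
        rewrite <- H0. unfold g.
        rewrite (sm_ext d (fun k => be i * c i k * xb mu k) (fun k => be i * (xb mu k * c i k))) by (intros; ring).
        rewrite sm_mul_l. ring. }
    rewrite sm_add, sm_mul_l, sm_mul_l, Hbsum.
    rewrite sm_swap. rewrite sm_zero; [ring|].
    intros k Hk'. rewrite (sm_ext m _ (fun i => xb mu k * (be i * c i k))) by (intros; ring).
    rewrite sm_mul_l. change (sm m (fun i => be i * c i k)) with (xb be k). rewrite Hbxb; auto; ring. }
  assert (HPsi : Psi nu = Psi mu).
  { unfold nu. rewrite Psi_shift, Hba.
    rewrite (sm_zero d (fun k => xb mu k * xb be k)) by (intros k Hk'; rewrite Hbxb; auto; ring).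
    rewrite (sm_zero d (fun k => xb be k ^ 2)) by (intros k Hk'; rewrite Hbxb; auto; ring).
    ring. }
  assert (Hsimp : simplex m nu).
  { split.
    - intros l Hl. unfold nu. destruct (Rlt_dec (be l) 0) as [Hb|Hb].
      + specialize (Hmin l Hl Hb). fold s in Hmin.
        assert (s * - be l <= mu l).
        { apply Rmult_le_compat_r with (r := - be l) in Hmin; [|lra].
          unfold Rdiv in Hmin. rewrite Rmult_assoc, Rinv_l in Hmin; lra. }
        lra.
      + specialize (Hpos l Hl). apply Rnot_lt_le in Hb. nra.
    - unfold nu. rewrite sm_add, sm_mul_l, Hbsum, Hsum. ring. }
  exists nu. split.
  - split; auto. intros w Hw. rewrite HPsi. apply Hmx; auto.
  - unfold cnt. apply cntb_lt with (i0 := is); auto.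
    + intros i Hi Hn. apply supp_true in Hn. apply supp_true'. intro H0.
      apply Hn. unfold nu. rewrite H0, Hbsup; [ring|].
      unfold supp; destruct (Req_EM_T (mu i) 0); auto; contradiction.
    + apply supp_true'; lra.
    + unfold supp. destruct (Req_EM_T (nu is) 0); auto. exfalso; apply n.
      unfold nu, s. field. lra.
Qed.

Lemma cs_supp n (b mu : nat -> R) : (forall i, mu i = 0 -> b i = 0) ->
  (sm n b) ^ 2 <= INR (cntb n (supp mu)) * sm n (fun i => b i ^ 2).
Proof.
  intros Hb. induction n; [simpl; lra|]. cbn [sm cntb].
  assert (HQ : 0 <= sm n (fun i => b i ^ 2)) by (apply sm_nonneg; intros; apply pow2_ge_0).
  destruct (supp mu n) eqn:E.
  2:{ apply supp_false in E. rewrite (Hb n E). rewrite Nat.add_0_r.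
      replace ((sm n b + 0) ^ 2) with (sm n b ^ 2) by ring.
      replace (sm n (fun i => b i ^ 2) + 0 ^ 2) with (sm n (fun i => b i ^ 2)) by ring. exact IHn. }
  - rewrite plus_INR. simpl (INR 1).
    set (N := INR (cntb n (supp mu))) in *. set (B := sm n b) in *. set (Q := sm n (fun i => b i ^ 2)) in *.
    assert (HN : 0 <= N) by apply pos_INR.
    destruct (Req_dec N 0) as [N0|N0].
    + rewrite N0 in IHn. assert (B = 0) by nra. subst; rewrite N0, H. nra.
    + assert (0 < N) by lra.
      assert (H1 : (N + 1) * (N * Q - B ^ 2) >= 0) by (apply Rle_ge, Rmult_le_pos; lra).
      assert (H2 : 0 <= (B - N * b n) ^ 2) by apply pow2_ge_0.
      assert (H3 : N * ((N + 1) * (Q + b n ^ 2) - (B + b n) ^ 2) =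
              (N + 1) * (N * Q - B ^ 2) + (B - N * b n) ^ 2) by ring.
      assert (H4 : 0 <= (N + 1) * (Q + b n ^ 2) - (B + b n) ^ 2).
      { apply Rnot_lt_le; intro Hc. assert (N * ((N + 1) * (Q + b n ^ 2) - (B + b n) ^ 2) < 0)
          by (apply Rmult_pos_neg; lra). lra. }
      lra.
Qed.

Lemma var_id (mu p : nat -> R) : sm m mu = 1 ->
  sm m (fun i => sm m (fun j => mu i * mu j * (p i - p j) ^ 2)) =
  2 * (sm m (fun i => mu i * p i ^ 2) - (sm m (fun i => mu i * p i)) ^ 2).
Proof.
  intros H1.
  rewrite (sm_ext m _ (fun i => (mu i * p i ^ 2) * sm m mu - 2 * (mu i * p i) * sm m (fun j => mu j * p j)
      + mu i * sm m (fun j => mu j * p j ^ 2))).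
  2:{ intros i _. rewrite <- !sm_mul_l. rewrite <- sm_sub, <- sm_add. apply sm_ext; intros; ring. }
  rewrite sm_add, sm_sub. rewrite (sm_ext m (fun i => mu i * p i ^ 2 * sm m mu) (fun i => sm m mu * (mu i * p i ^ 2))) by (intros; ring).
  rewrite (sm_ext m (fun i => 2 * (mu i * p i) * sm m (fun j => mu j * p j))
     (fun i => (2 * sm m (fun j => mu j * p j)) * (mu i * p i))) by (intros; ring).
  rewrite (sm_ext m (fun i => mu i * sm m (fun j => mu j * p j ^ 2))
     (fun i => sm m (fun j => mu j * p j ^ 2) * mu i)) by (intros; ring).
  rewrite !sm_mul_l, H1. ring.
Qed.

Lemma final mu : IsMax mu -> (cnt mu <= d + 1)%nat -> (1 <= d)%nat ->
  L = 2 * INR d / (INR d + 1) ->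
  (forall i j, (i < m)%nat -> (j < m)%nat -> sqsum d (fun k => c i k - c j k) <= (r i + r j) ^ 2) ->
  forall i, (i < m)%nat -> sqsum d (fun k => xb mu k - c i k) <= L * r i ^ 2.
Proof.
  intros Hmax Hcnt Hd HL Hpair i Hi.
  pose proof Hmax as [[Hpos Hsum] Hmx].
  set (X2 := sm d (fun k => xb mu k ^ 2)).
  set (S := sm m (fun j => mu j * r j ^ 2)).
  set (A := sm m (fun j => mu j * r j)).
  set (Q := sm m (fun j => (mu j * r j) ^ 2)).
  set (T := sm m (fun i => sm m (fun j => mu i * mu j * sqsum d (fun k => c i k - c j k)))).
  assert (St1 : sqsum d (fun k => xb mu k - c i k) - L * r i ^ 2 = g mu i + X2).
  { rewrite !sqsum_sm. unfold g, a. rewrite sqsum_sm.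
    rewrite (sm_ext d _ (fun k => (xb mu k ^ 2 + c i k ^ 2) - 2 * (xb mu k * c i k))) by (intros; ring).
    rewrite sm_sub, sm_add, sm_mul_l. unfold X2. ring. }
  assert (St2 : g mu i <= sm m (fun j => mu j * g mu j)).
  { replace (g mu i) with (sm m (fun j => mu j * g mu i)) by (rewrite (sm_ext m _ (fun j => g mu i * mu j)) by (intros; ring); rewrite sm_mul_l, Hsum; ring).
    apply sm_le. intros j Hj. destruct (Req_EM_T (mu j) 0) as [E|E]; [rewrite E; lra|].
    specialize (Hpos j Hj). apply Rmult_le_compat_l; [lra|]. apply KKT; auto; lra. }
  assert (St3 : sm m (fun j => mu j * g mu j) = sm m (fun j => mu j * a j) - 2 * X2).
  { unfold g. rewrite (sm_ext m _ (fun j => mu j * a j - 2 * (mu j * sm d (fun k => xb mu k * c j k)))) by (intros; ring).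
    rewrite sm_sub, sm_mul_l. f_equal. f_equal.
    rewrite (sm_ext m _ (fun j => sm d (fun k => xb mu k * (mu j * c j k)))).
    2:{ intros j _. rewrite <- sm_mul_l. apply sm_ext; intros; ring. }
    rewrite sm_swap. unfold X2. apply sm_ext. intros k _. rewrite sm_mul_l. change (sm m (fun j => mu j * c j k)) with (xb mu k). ring. }
  assert (St4 : sm m (fun j => mu j * a j) = sm m (fun j => mu j * sqsum d (c j)) - L * S).
  { unfold a, S. rewrite <- sm_mul_l, <- sm_sub. apply sm_ext; intros; ring. }
  assert (St5 : 2 * (sm m (fun j => mu j * sqsum d (c j)) - X2) = T).
  { unfold T.
    rewrite (sm_ext m (fun i => sm m (fun j => mu i * mu j * sqsum d (fun k => c i k - c j k)))
       (fun i => sm d (fun k => sm m (fun j => mu i * mu j * (c i k - c j k) ^ 2)))).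
    2:{ intros i' _. rewrite <- sm_swap. apply sm_ext. intros j _. rewrite sqsum_sm, <- sm_mul_l. auto. }
    rewrite sm_swap.
    rewrite (sm_ext d _ (fun k => 2 * (sm m (fun i => mu i * c i k ^ 2) - (sm m (fun i => mu i * c i k)) ^ 2))).
    2:{ intros k _. apply var_id; auto. }
    rewrite sm_mul_l, sm_sub. unfold X2, xb.
    rewrite (sm_ext m (fun j => mu j * sqsum d (c j)) (fun j => sm d (fun k => mu j * c j k ^ 2))).
    2:{ intros j _. rewrite sqsum_sm, sm_mul_l. auto. }
    rewrite sm_swap. auto. }
  assert (St6 : T <= sm m (fun i => sm m (fun j => mu i * mu j * (r i + r j) ^ 2 - dl i j * (4 * (mu i * r i) ^ 2)))).
  { unfold T. apply sm_le. intros i' Hi'. apply sm_le. intros j Hj.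
    assert (0 <= mu i' * mu j) by (apply Rmult_le_pos; auto).
    unfold dl. destruct (Nat.eq_dec j i').
    - subst j. rewrite sqsum_sm, sm_zero by (intros; ring). nra.
    - specialize (Hpair i' j Hi' Hj). nra. }
  assert (St7 : sm m (fun i => sm m (fun j => mu i * mu j * (r i + r j) ^ 2 - dl i j * (4 * (mu i * r i) ^ 2)))
     = 2 * S + 2 * A ^ 2 - 4 * Q).
  { rewrite (sm_ext m _ (fun i => (r i ^ 2 * mu i) * sm m mu + (2 * mu i * r i) * A + mu i * S
                                 - 4 * (mu i * r i) ^ 2)).
    2:{ intros i' Hi'. rewrite sm_sub.
        rewrite (sm_delta m i' (fun _ => 4 * (mu i' * r i') ^ 2)) by auto.
        unfold A, S. rewrite <- !sm_mul_l. f_equal. rewrite <- !sm_add. apply sm_ext; intros; ring. }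
    rewrite sm_sub, !sm_add, Hsum. unfold Q.
    rewrite (sm_ext m (fun i => r i ^ 2 * mu i * 1) (fun i => mu i * r i ^ 2)) by (intros; ring).
    rewrite (sm_ext m (fun i => 2 * mu i * r i * A) (fun i => (2 * A) * (mu i * r i))) by (intros; ring).
    rewrite (sm_ext m (fun i => mu i * S) (fun i => S * mu i)) by (intros; ring).
    rewrite !sm_mul_l, Hsum. fold S A Q. ring. }
  assert (Hvar : A ^ 2 <= S).
  { assert (0 <= sm m (fun j => mu j * (r j - A) ^ 2)).
    { apply sm_nonneg. intros j Hj. apply Rmult_le_pos; auto. apply pow2_ge_0. }
    rewrite (sm_ext m _ (fun j => mu j * r j ^ 2 - (2 * A) * (mu j * r j) + A ^ 2 * mu j)) in H by (intros; ring).
    rewrite sm_add, sm_sub, !sm_mul_l, Hsum in H. fold S A in H. nra. }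
  assert (Hcs : A ^ 2 <= (INR d + 1) * Q).
  { assert (H1 := cs_supp m (fun j => mu j * r j) mu ltac:(intros j E; cbv beta; rewrite E; ring)).
    fold A Q in H1. unfold cnt in Hcnt.
    assert (INR (cntb m (supp mu)) <= INR d + 1) by (rewrite <- S_INR; apply le_INR; lia).
    assert (0 <= Q) by (apply sm_nonneg; intros; apply pow2_ge_0). apply Rle_trans with (1 := H1); apply Rmult_le_compat_r; auto. }
  assert (HdR : 1 <= INR d) by (apply (le_INR 1); auto).
  assert (HQ : 0 <= Q) by (apply sm_nonneg; intros; apply pow2_ge_0).
  assert (HLS : L * S * (INR d + 1) = 2 * INR d * S) by (rewrite HL; field; lra).
  assert (Hfin : S + A ^ 2 - 2 * Q - L * S <= 0).
  { assert ((INR d + 1) * (S + A ^ 2 - 2 * Q - L * S) <= 0).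
    { assert (E : (INR d + 1) * (S + A ^ 2 - 2 * Q - L * S) =
         (INR d + 1) * (S + A ^ 2 - 2 * Q) - L * S * (INR d + 1)) by ring.
      rewrite E, HLS. nra. }
    nra. }
  lra.
Qed.
End Main.

Lemma sqsum_nonneg d v : 0 <= sqsum d v.
Proof. rewrite sqsum_sm. apply sm_nonneg; intros; apply pow2_ge_0. Qed.

Lemma ball_sq d c0 r0 x : 0 < r0 -> in_ball d c0 r0 x -> sqsum d (fun k => x k - c0 k) <= r0 ^ 2.
Proof. unfold in_ball, enorm. intros Hr H.
  pose proof (sqsum_nonneg d (fun k => x k - c0 k)).
  rewrite <- (sqrt_sqrt (sqsum d (fun k => x k - c0 k))) by auto.
  pose proof (sqrt_pos (sqsum d (fun k => x k - c0 k))). nra. Qed.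

Lemma pair_bound d ci cj ri rj : 0 < ri -> 0 < rj ->
  (exists x, in_ball d ci ri x /\ in_ball d cj rj x) ->
  sqsum d (fun k => ci k - cj k) <= (ri + rj) ^ 2.
Proof.
  intros Hi Hj [x [H1 H2]].
  apply ball_sq in H1; auto. apply ball_sq in H2; auto.
  rewrite sqsum_sm in *.
  set (U := sm d (fun k => (x k - ci k) ^ 2)) in *.
  set (V := sm d (fun k => (x k - cj k) ^ 2)) in *.
  set (P := sm d (fun k => (x k - ci k) * (x k - cj k))).
  assert (E1 : sm d (fun k => (ci k - cj k) ^ 2) = V + U - 2 * P).
  { unfold U, V, P. rewrite <- sm_mul_l, <- sm_add, <- sm_sub. apply sm_ext; intros; ring. }
  assert (E2 : 0 <= sm d (fun k => (rj * (x k - ci k) + ri * (x k - cj k)) ^ 2))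
    by (apply sm_nonneg; intros; apply pow2_ge_0).
  assert (E3 : sm d (fun k => (rj * (x k - ci k) + ri * (x k - cj k)) ^ 2) =
     rj ^ 2 * U + 2 * (ri * rj) * P + ri ^ 2 * V).
  { unfold U, V, P. rewrite <- !sm_mul_l, <- !sm_add. apply sm_ext; intros; ring. }
  rewrite E1. rewrite E3 in E2.
  assert (- P <= ri * rj).
  { assert (0 < ri * rj) by nra.
    assert (2 * (ri * rj) * (- P) <= 2 * (ri * rj) * (ri * rj)) by nra. nra. }
  nra.
Qed.

Theorem lemma2p2 (d m : nat) (c : nat -> point) (r : nat -> R)
  (hr : forall i, (i < m)%nat -> 0 < r i)
  (hpair : forall i j, (i < m)%nat -> (j < m)%nat ->
      exists x : point, in_ball d (c i) (r i) x /\ in_ball d (c j) (r j) x) :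
  exists x : point, forall i, (i < m)%nat ->
    in_ball d (c i) (sqrt (2 * INR d / (INR d + 1)) * r i) x.
Proof.
  destruct d as [|d'].
  { exists (fun _ => 0). intros i Hi. unfold in_ball, enorm. simpl sqsum. rewrite sqrt_0.
    apply Rmult_le_pos; [apply sqrt_pos| left; auto]. }
  set (d := Datatypes.S d').
  destruct m as [|m'].
  { exists (fun _ => 0). intros; lia. }
  set (m := Datatypes.S m').
  set (L := 2 * INR d / (INR d + 1)).
  assert (HL0 : 0 <= L).
  { unfold L. pose proof (pos_INR d). apply Rmult_le_pos; [lra|]. left; apply Rinv_0_lt_compat; lra. }
  destruct (Bridge.bridge m d (a d c r L) (Cc c) ltac:(unfold m; lia)) as [mu0 [Hs0 Hm0]].
  assert (Hmax0 : IsMax m d c r L mu0) by (split; auto).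
  assert (Hred : forall n mu, IsMax m d c r L mu -> (cnt m mu <= n)%nat ->
     exists mu', IsMax m d c r L mu' /\ (cnt m mu' <= d + 1)%nat).
  { induction n; intros mu Hmu Hc.
    - exists mu; split; auto; lia.
    - destruct (Compare_dec.le_lt_dec (cnt m mu) (d + 1)) as [l|l]; [exists mu; auto|].
      destruct (reduce m d c r L mu Hmu l) as [nu [Hnu Hlt]].
      apply (IHn nu Hnu); lia. }
  destruct (Hred _ mu0 Hmax0 (le_n _)) as [mu [Hmu Hcnt]].
  exists (xb m c mu). intros i Hi.
  assert (Hfin := final m d c r L mu Hmu Hcnt ltac:(unfold d; lia) eq_refl
    (fun i j Hi Hj => pair_bound d (c i) (c j) (r i) (r j) (hr i Hi) (hr j Hj) (hpair i j Hi Hj)) i Hi).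
  unfold in_ball, enorm.
  assert (E : sqrt (L * r i ^ 2) = sqrt L * r i).
  { rewrite sqrt_mult_alt by auto. rewrite sqrt_pow2 by (left; auto). reflexivity. }
  change (sqrt (sqsum d (fun k => xb m c mu k - c i k)) <= sqrt L * r i).
  rewrite <- E. apply sqrt_le_1_alt. exact Hfin.
Qed.
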